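(* (i) For every $n\ge 0$ and $i\in\{0,1\}$, $v_n(x,i)$ is concave in $x$, i.e. $\Delta_n(x,i)\le\Delta_n(x+1,i)$ for all $x\ge0$. (ii) For every $n\ge0$, with $B^s_n=1+T_{\Delta_n(\cdot,0)}(c/\delta)$ and $B^d_{n+1}=T_{\Delta_{n+1}(\cdot,0)}(R)$, the optimal decisions satisfy $a^s_{n+1}(0)=l$; for $x>0$, $a^s_{n+1}(x)=l$ if $x\le B^s_n$ and $a^s_{n+1}(x)=h$ if $x>B^s_n$; and for $x\ge 0$, $a^d_{n+1}(x)=1$ if $x\le B^d_{n+1}$ and $a^d_{n+1}(x)=0$ if $x>B^d_{n+1}$.
   Context: Parameters: $\lambda>0$, $0<\mu_l<\mu_h$, $\delta=\mu_h-\mu_l$, $R\ge 0$, $c>0$, and $h:\{0,1,2,\dots\}\to\mathbb{R}$ nondecreasing and convex with $h(0)=0$; the rates are normalized so that $\lambda+\mu_h+\beta=1$ for a discount rate $\beta>0$. Finite-horizon value functions on $S=\{0,1,2,\dots\}\times\{0,1\}$: $v_0\equiv 0$ and for $n\ge 0$: $v_{n+1}(0,0)=\lambda v_n(0,1)+\mu_h v_n(0,0)$; $v_{n+1}(x,0)=-h(x)+\lambda v_n(x,1)+\mu_l v_n(x-1,0)+\max\{\delta v_n(x,0),-c+\delta v_n(x-1,0)\}$ for $x\ge1$; $v_{n+1}(x,1)=\max\{R+v_{n+1}(x+1,0),v_{n+1}(x,0)\}$ for $x\ge 0$. Define $\Delta_n(x,i)=v_n(x,i)-v_n(x+1,i)$.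 Optimal decisions with $n+1$ steps remaining: admission decision in state $(x,1)$, $x\ge0$: $a^d_{n+1}(x)=1$ (admit) if $\Delta_{n+1}(x,0)\le R$ and $0$ (reject) otherwise; service-rate decision in state $(x,0)$: $a^s_{n+1}(0)=l$, and for $x>0$, $a^s_{n+1}(x)=l$ (low rate $\mu_l$) if $\Delta_n(x-1,0)\le c/\delta$ and $h$ (high rate $\mu_h$) otherwise. Threshold function: for $f:\{0,1,2,\dots\}\to\mathbb{R}$ and $\theta\in\mathbb{R}$, $T_f(\theta)=\sup\{k\ge0: f(k)\le\theta\}$, with $\sup\emptyset=-1$ (the value $+\infty$ is allowed). *)

(* Defs.v *)
From Stdlib Require Import Reals Lra Lia ClassicalEpsilon.
Open Scope R_scope.

(* States (x, i) with x : nat and i : bool, where i = false means 0 and i = true means 1. *)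

(* v n (x,i) : finite-horizon value function with n steps remaining.
   Parameters: lam = lambda, mul = mu_l, muh = mu_h, Rw = R (reward), c, h. *)
Fixpoint v (lam mul muh Rw c : R) (h : nat -> R) (n : nat) : nat * bool -> R :=
  match n with
  | O => fun _ => 0
  | S m =>
    let w := v lam mul muh Rw c h m in
    let delta := muh - mul in
    let v0 (x : nat) : R :=
      match x with
      | O => lam * w (O, true) + muh * w (O, false)
      | S y => - h x + lam * w (x, true) + mul * w (y, false)
               + Rmax (delta * w (x, false)) (- c + delta * w (y, false))
      end in
    fun s => let (x, i) := s in
      if i then Rmax (Rw + v0 (S x)) (v0 x) else v0 x
  end.

Definition Dlt (lam mul muh Rw c : R) (h : nat -> R) (n x : nat) (i : bool) : R :=
  v lam mul muh Rw c h n (x, i) - v lam mul muh Rw c h n (S x, i).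

Inductive rate := Low | High.

(* a_s lam mul muh Rw c h n x  =  a^s_{n+1}(x)  (service rate with n+1 steps remaining) *)
Definition a_s (lam mul muh Rw c : R) (h : nat -> R) (n x : nat) : rate :=
  match x with
  | O => Low
  | S y => if Rle_dec (Dlt lam mul muh Rw c h n y false) (c / (muh - mul)) then Low else High
  end.

(* a_d lam mul muh Rw c h m x  =  a^d_m(x)  (true = admit, false = reject);
   used with m = n+1. *)
Definition a_d (lam mul muh Rw c : R) (h : nat -> R) (m x : nat) : bool :=
  if Rle_dec (Dlt lam mul muh Rw c h m x false) Rw then true else false.

Inductive extn := ENeg1 | EFin (k : nat) | EInf.

(* t is the supremum of {k >= 0 : f k <= th}, with sup of the empty set = -1. *)
Definition is_thr (f : nat -> R) (th : R) (t : extn) : Prop :=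
  match t with
  | ENeg1 => forall k, th < f k
  | EFin m => f m <= th /\ (forall k, f k <= th -> (k <= m)%nat)
  | EInf => forall m, exists k, (m <= k)%nat /\ f k <= th
  end.

Definition T (f : nat -> R) (th : R) : extn :=
  epsilon (inhabits ENeg1) (is_thr f th).

Definition ext_succ (t : extn) : extn :=
  match t with ENeg1 => EFin 0 | EFin m => EFin (S m) | EInf => EInf end.

Definition ext_le (x : nat) (t : extn) : Prop :=
  match t with ENeg1 => False | EFin m => (x <= m)%nat | EInf => True end.

Definition ext_gt (x : nat) (t : extn) : Prop :=
  match t with ENeg1 => True | EFin m => (m < x)%nat | EInf => False end.

Definition Bs (lam mul muh Rw c : R) (h : nat -> R) (n : nat) : extn :=
  ext_succ (T (fun x => Dlt lam mul muh Rw c h n x false) (c / (muh - mul))).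

Definition Bd (lam mul muh Rw c : R) (h : nat -> R) (m : nat) : extn :=
  T (fun x => Dlt lam mul muh Rw c h m x false) Rw.

(* Main.v *)
Require Import Defs.
From Stdlib Require Import Reals.
From Stdlib Require Import Lra Lia ClassicalEpsilon Classical.
Open Scope R_scope.

Lemma Rmax_shift (p q : R) : Rmax p q = p + Rmax 0 (q - p).
Proof. unfold Rmax; repeat destruct Rle_dec; lra. Qed.

Lemma phi_mono (u1 u2 w1 w2 c : R) : u1 <= u2 -> w1 <= w2 ->
  w1 + Rmax 0 (u1 - c) - Rmax 0 (w1 - c) <= w2 + Rmax 0 (u2 - c) - Rmax 0 (w2 - c).
Proof. intros; unfold Rmax; repeat destruct Rle_dec; lra. Qed.

Lemma phi_nonneg (u w c : R) : 0 <= u -> 0 <= w -> 0 < c ->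
  0 <= w + Rmax 0 (u - c) - Rmax 0 (w - c).
Proof. intros; unfold Rmax; repeat destruct Rle_dec; lra. Qed.

Lemma psi_mono (Rw e0 e1 e2 : R) : e0 <= e1 -> e1 <= e2 ->
  e1 + Rmax Rw e0 - Rmax Rw e1 <= e2 + Rmax Rw e1 - Rmax Rw e2.
Proof. intros; unfold Rmax; repeat destruct Rle_dec; lra. Qed.

Lemma psi_nonneg (Rw e0 e1 : R) : 0 <= Rw -> 0 <= e1 ->
  0 <= e1 + Rmax Rw e0 - Rmax Rw e1.
Proof. intros; unfold Rmax; repeat destruct Rle_dec; lra. Qed.

Definition Aa (lam mul muh Rw c : R) (h : nat -> R) (n x : nat) : R :=
  match x with O => 0 | S y => Dlt lam mul muh Rw c h n y false end.

Lemma v0_formula lam mul muh Rw c h n x : 0 < c -> h O = 0 ->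
  v lam mul muh Rw c h (S n) (x, false) =
  - h x + lam * v lam mul muh Rw c h n (x, true)
  + mul * v lam mul muh Rw c h n (pred x, false)
  + (muh - mul) * v lam mul muh Rw c h n (x, false)
  + Rmax 0 ((muh - mul) * Aa lam mul muh Rw c h n x - c).
Proof.
  intros Hc Hh0. destruct x as [|y].
  - change (v lam mul muh Rw c h (S n) (0%nat, false)) with
      (lam * v lam mul muh Rw c h n (0%nat, true) + muh * v lam mul muh Rw c h n (0%nat, false)).
    simpl Aa. simpl pred. rewrite Hh0.
    replace (Rmax 0 ((muh - mul) * 0 - c)) with 0 by (unfold Rmax; destruct Rle_dec; lra).
    ring.
  - change (v lam mul muh Rw c h (S n) (S y, false)) with
      (- h (S y) + lam * v lam mul muh Rw c h n (S y, true)
       + mul * v lam mul muh Rw c h n (y, false)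
       + Rmax ((muh - mul) * v lam mul muh Rw c h n (S y, false))
              (- c + (muh - mul) * v lam mul muh Rw c h n (y, false))).
    rewrite Rmax_shift. simpl Aa. simpl pred. unfold Dlt.
    replace (- c + (muh - mul) * v lam mul muh Rw c h n (y, false) -
        (muh - mul) * v lam mul muh Rw c h n (S y, false)) with
      ((muh - mul) * (v lam mul muh Rw c h n (y, false) - v lam mul muh Rw c h n (S y, false)) - c)
      by ring.
    ring.
Qed.

Lemma pred_diff lam mul muh Rw c h n x :
  v lam mul muh Rw c h n (pred x, false) - v lam mul muh Rw c h n (x, false)
  = Aa lam mul muh Rw c h n x.
Proof. destruct x; simpl; unfold Dlt; ring. Qed.

Lemma E_formula lam mul muh Rw c h n x : 0 < c -> h O = 0 ->
  Dlt lam mul muh Rw c h (S n) x false =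
  (h (S x) - h x) + lam * Dlt lam mul muh Rw c h n x true
  + mul * Aa lam mul muh Rw c h n x
  + (muh - mul) * Dlt lam mul muh Rw c h n x false
  + Rmax 0 ((muh - mul) * Aa lam mul muh Rw c h n x - c)
  - Rmax 0 ((muh - mul) * Dlt lam mul muh Rw c h n x false - c).
Proof.
  intros Hc Hh0.
  unfold Dlt at 1. rewrite !v0_formula by assumption.
  rewrite <- (pred_diff lam mul muh Rw c h n x).
  change (Aa lam mul muh Rw c h n (S x)) with (Dlt lam mul muh Rw c h n x false).
  simpl pred. unfold Dlt. ring.
Qed.

Lemma g_formula lam mul muh Rw c h n x :
  v lam mul muh Rw c h (S n) (x, true) =
  v lam mul muh Rw c h (S n) (S x, false) + Rmax Rw (Dlt lam mul muh Rw c h (S n) x false).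
Proof.
  change (v lam mul muh Rw c h (S n) (x, true)) with
    (Rmax (Rw + v lam mul muh Rw c h (S n) (S x, false)) (v lam mul muh Rw c h (S n) (x, false))).
  unfold Dlt, Rmax; repeat destruct Rle_dec; lra.
Qed.

Lemma main_ind (lam mul muh Rw c : R) (h : nat -> R)
  (Hlam : 0 < lam) (Hmul : 0 < mul) (Hmu : mul < muh)
  (HR : 0 <= Rw) (Hc : 0 < c) (Hh0 : h O = 0)
  (Hhmon : forall x, h x <= h (S x))
  (Hhconv : forall x, h (S x) - h x <= h (S (S x)) - h (S x)) :
  forall n x,
    0 <= Dlt lam mul muh Rw c h n x false /\
    Dlt lam mul muh Rw c h n x false <= Dlt lam mul muh Rw c h n (S x) false /\
    0 <= Dlt lam mul muh Rw c h n x true /\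
    Dlt lam mul muh Rw c h n x true <= Dlt lam mul muh Rw c h n (S x) true.
Proof.
  induction n as [|n IH].
  - intros x; unfold Dlt; simpl; lra.
  - set (D := Dlt lam mul muh Rw c h n).
    set (A := Aa lam mul muh Rw c h n).
    assert (IH' : forall x, 0 <= D x false /\ D x false <= D (S x) false /\
       0 <= D x true /\ D x true <= D (S x) true) by exact IH.
    clear IH; rename IH' into IH.
    assert (HA0 : forall x, 0 <= A x).
    { intros [|y]; simpl; [lra|]. apply (IH y). }
    assert (HAD : forall x, A x <= D x false).
    { intros [|y]; simpl; [apply (IH 0%nat)|]. apply (IH y). }
    assert (HAS : forall x, A (S x) = D x false) by reflexivity.
    set (d := muh - mul).
    assert (Hd : 0 < d) by (unfold d; lra).
    assert (Enn : forall x, 0 <= Dlt lam mul muh Rw c h (S n) x false).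
    { intros x. rewrite E_formula by assumption. fold D A d.
      pose proof (Hhmon x). destruct (IH x) as (H1 & H2 & H3 & H4).
      pose proof (HA0 x).
      assert (P1 : 0 <= d * A x) by (apply Rmult_le_pos; lra).
      assert (P2 : 0 <= d * D x false) by (apply Rmult_le_pos; lra).
      pose proof (phi_nonneg (d * A x) (d * D x false) c P1 P2 Hc).
      assert (0 <= lam * D x true) by (apply Rmult_le_pos; lra).
      assert (0 <= mul * A x) by (apply Rmult_le_pos; lra).
      lra. }
    assert (Emon : forall x, Dlt lam mul muh Rw c h (S n) x false <=
                             Dlt lam mul muh Rw c h (S n) (S x) false).
    { intros x. rewrite !E_formula by assumption. fold D A d. rewrite HAS.
      pose proof (Hhconv x). destruct (IH x) as (H1 & H2 & H3 & H4).
      pose proof (HAD x).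
      assert (P1 : d * A x <= d * D x false) by (apply Rmult_le_compat_l; lra).
      assert (P2 : d * D x false <= d * D (S x) false) by (apply Rmult_le_compat_l; lra).
      pose proof (phi_mono (d * A x) (d * D x false) (d * D x false) (d * D (S x) false) c P1 P2).
      assert (lam * D x true <= lam * D (S x) true) by (apply Rmult_le_compat_l; lra).
      assert (mul * A x <= mul * D x false) by (apply Rmult_le_compat_l; lra).
      lra. }
    intros x. repeat split.
    + apply Enn.
    + apply Emon.
    + unfold Dlt at 1. rewrite !g_formula.
      pose proof (psi_nonneg Rw (Dlt lam mul muh Rw c h (S n) x false)
                    (Dlt lam mul muh Rw c h (S n) (S x) false) HR (Enn (S x))).
      unfold Dlt in *. lra.
    + unfold Dlt at 1 2. rewrite !g_formula.
      pose proof (psi_mono Rw (Dlt lam mul muh Rw c h (S n) x false)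
                    (Dlt lam mul muh Rw c h (S n) (S x) false)
                    (Dlt lam mul muh Rw c h (S n) (S (S x)) false) (Emon x) (Emon (S x))).
      unfold Dlt in *. lra.
Qed.

Lemma thr_exists (f : nat -> R) (th : R) : exists t, is_thr f th t.
Proof.
  destruct (classic (forall m, exists k, (m <= k)%nat /\ f k <= th)) as [H|H].
  - exists EInf. exact H.
  - apply not_all_ex_not in H. destruct H as [m Hm].
    assert (Hb : forall k, (m <= k)%nat -> th < f k).
    { intros k Hk. destruct (Rle_dec (f k) th) as [r|r]; [|lra].
      exfalso; apply Hm; exists k; auto. }
    clear Hm. revert Hb. induction m as [|m IHm]; intros Hb.
    + exists ENeg1. intros k; apply Hb; lia.
    + destruct (Rle_dec (f m) th) as [r|r].
      * exists (EFin m). split; auto. intros k Hk.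
        destruct (Compare_dec.le_lt_dec k m); auto. assert (Hk2 : (S m <= k)%nat) by lia. pose proof (Hb k Hk2); lra.
      * apply IHm. intros k Hk. destruct (Nat.eq_dec k m) as [->|]; [lra|].
        apply Hb; lia.
Qed.

Lemma thr_facts (f : nat -> R) (th : R) (Hm : forall x, f x <= f (S x)) (x : nat) :
  (ext_le x (T f th) -> f x <= th) /\ (ext_gt x (T f th) -> th < f x).
Proof.
  assert (Hmono : forall a b, (a <= b)%nat -> f a <= f b).
  { intros a b Hab. induction Hab; [lra|]. pose proof (Hm m); lra. }
  assert (Hs : is_thr f th (T f th)).
  { unfold T. apply epsilon_spec. apply thr_exists. }
  destruct (T f th) as [|m|]; simpl in *; split; intros H.
  - contradiction.
  - apply Hs.
  - destruct Hs as [H1 H2]. pose proof (Hmono _ _ H). lra.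
  - destruct Hs as [H1 H2]. destruct (Rle_dec (f x) th) as [r|r]; [|lra].
    pose proof (H2 x r). lia.
  - destruct (Hs x) as [k [Hk1 Hk2]]. pose proof (Hmono _ _ Hk1). lra.
  - contradiction.
Qed.

Theorem theorem2 (lam mul muh beta Rw c : R) (h : nat -> R)
  (Hlam : 0 < lam) (Hmul : 0 < mul) (Hmu : mul < muh)
  (HR : 0 <= Rw) (Hc : 0 < c) (Hbeta : 0 < beta)
  (Hnorm : lam + muh + beta = 1)
  (Hh0 : h O = 0)
  (Hhmon : forall x, h x <= h (S x))
  (Hhconv : forall x, h (S x) - h x <= h (S (S x)) - h (S x)) :
  (forall (n : nat) (i : bool) (x : nat),
      Dlt lam mul muh Rw c h n x i <= Dlt lam mul muh Rw c h n (S x) i)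
  /\
  (forall n : nat,
      a_s lam mul muh Rw c h n O = Low
      /\ (forall x : nat, (0 < x)%nat ->
            (ext_le x (Bs lam mul muh Rw c h n) -> a_s lam mul muh Rw c h n x = Low)
            /\ (ext_gt x (Bs lam mul muh Rw c h n) -> a_s lam mul muh Rw c h n x = High))
      /\ (forall x : nat,
            (ext_le x (Bd lam mul muh Rw c h (S n)) -> a_d lam mul muh Rw c h (S n) x = true)
            /\ (ext_gt x (Bd lam mul muh Rw c h (S n)) -> a_d lam mul muh Rw c h (S n) x = false))).
Proof.
  pose proof (main_ind lam mul muh Rw c h Hlam Hmul Hmu HR Hc Hh0 Hhmon Hhconv) as M.
  split.
  { intros n [|] x; apply M. }
  intros n. split; [reflexivity|]. split.
  - intros [|y] Hy; [lia|].
    pose proof (thr_facts (fun x => Dlt lam mul muh Rw c h n x false) (c / (muh - mul))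
                  (fun x => proj1 (proj2 (M n x))) y) as [F1 F2].
    unfold Bs, a_s.
    destruct (T (fun x : nat => Dlt lam mul muh Rw c h n x false) (c / (muh - mul))) as [|m|];
      simpl in *; split; intros H;
      destruct Rle_dec as [r|r]; auto; try contradiction; try lia.
    + pose proof (F2 I); lra.
    + pose proof (F1 ltac:(lia)); lra.
    + pose proof (F2 ltac:(lia)); lra.
    + pose proof (F1 I); lra.
  - intros x.
    pose proof (thr_facts (fun x => Dlt lam mul muh Rw c h (S n) x false) Rw
                  (fun x => proj1 (proj2 (M (S n) x))) x) as [F1 F2].
    unfold Bd, a_d. simpl in F1, F2. split; intros H;
      destruct Rle_dec as [r|r]; auto;
      first [pose proof (F1 H) | pose proof (F2 H)]; lra.
Qed.
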